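(* Let $G,D\subsetneq\mathbb{R}^n$ be domains and $1\le p<\infty$. Let $f:G\to D$ be a surjective mapping and $L\ge1$ such that \[ b_{G,p}(z_1,z_2)/L\le b_{D,p}(f(z_1),f(z_2))\le L\,b_{G,p}(z_1,z_2)\quad\text{for all } z_1,z_2\in G. \] Then $f$ is a quasiconformal homeomorphism (either sense-preserving or sense-reversing), and its linear dilatation satisfies $H_f(z)\le 4^{1-\frac1p}L^2$ for all $z\in G$.
   Context: For a domain $G\subsetneq\mathbb{R}^n$, $p\ge1$ and $z_1,z_2\in G$, $b_{G,p}(z_1,z_2)=\sup_{z\in\partial G}\frac{|z_1-z_2|}{\sqrt[p]{|z_1-z|^p+|z-z_2|^p}}$. For a homeomorphism $f$ and $z\in G$, the linear dilatation is $H_f(z)=\limsup_{r\to0}\frac{L_f(z,r)}{l_f(z,r)}$, where $L_f(z,r)=\sup\{|f(z_1)-f(z)|:|z_1-z|=r\}$ and $l_f(z,r)=\inf\{|f(z_1)-f(z)|:|z_1-z|=r\}$. *)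

(* Defs.v *)
(* R^n is modelled as 'rV[R]_n, with the Euclidean norm
   defined below (the library's default norm on 'rV is the max norm; both induce
   the same topology, which is the one used for open/connected/closure/continuity). *)
From HB Require Import structures.
From mathcomp Require Import all_boot all_order all_algebra.
From mathcomp Require Import all_classical all_reals all_analysis.
Set Implicit Arguments. Unset Strict Implicit. Unset Printing Implicit Defensive.
Import Order.TTheory GRing.Theory Num.Theory.
Import numFieldNormedType.Exports.
Local Open Scope classical_set_scope.
Local Open Scope ring_scope.

Section Defs.
Variables (R : realType) (n : nat).
Notation V := 'rV[R]_n.

Definition enorm (x : V) : R := Num.sqrt (\sum_(i < n) x ord0 i ^+ 2).
Definition edist (x y : V) : R := enorm (x - y).

Definition domain (G : set V) : Prop := G !=set0 /\ open G /\ connected G.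

Definition bdry (G : set V) : set V := closure G `\` interior G.

Definition b_metric (G : set V) (p : R) (z1 z2 : V) : R :=
  sup [set edist z1 z2 / powR (powR (edist z1 z) p + powR (edist z z2) p) p^-1
      | z in bdry G].

Definition Lf (f : V -> V) (z : V) (r : R) : \bar R :=
  ereal_sup [set (edist (f z1) (f z))%:E | z1 in [set z1 | edist z1 z = r]].
Definition lf (f : V -> V) (z : V) (r : R) : \bar R :=
  ereal_inf [set (edist (f z1) (f z))%:E | z1 in [set z1 | edist z1 z = r]].

Definition dil_ratio (f : V -> V) (z : V) (r : R) : \bar R :=
  if lf f z r == 0%E then +oo%E else (Lf f z r * (fine (lf f z r))^-1%:E)%E.

Definition lin_dil (f : V -> V) (z : V) : \bar R :=
  limf_esup (dil_ratio f z) (0%R^'+).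

Definition homeo_onto (G D : set V) (f : V -> V) : Prop :=
  exists g : V -> V,
    (forall x, G x -> D (f x)) /\ (forall y, D y -> G (g y)) /\
    (forall x, G x -> g (f x) = x) /\ (forall y, D y -> f (g y) = y) /\
    {within G, continuous f} /\ {within D, continuous g}.

Definition quasiconformal (G D : set V) (f : V -> V) : Prop :=
  homeo_onto G D f /\ exists H : R, forall z, G z -> (lin_dil f z <= H%:E)%E.

End Defs.

(* Main.v *)
From Pilot Require Import Defs.
From HB Require Import structures.
From mathcomp Require Import all_boot all_order all_algebra.
From mathcomp Require Import all_classical all_reals all_analysis.
Import Order.TTheory GRing.Theory Num.Theory.
Import numFieldNormedType.Exports.
Local Open Scope classical_set_scope.
Local Open Scope ring_scope.
From mathcomp Require Import ring lra.
Import Pilot.Defs.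
Set Implicit Arguments. Unset Strict Implicit. Unset Printing Implicit Defensive.


Section Eucl.
Variables (R : realType) (n : nat).
Notation V := 'rV[R]_n.
Implicit Types x y z : V.

Lemma sum_sq_ge0 (a : 'I_n -> R) : 0 <= \sum_i a i ^+ 2.
Proof. by apply: sumr_ge0 => i _; exact: sqr_ge0. Qed.

Lemma sum_sq_eq0 (a : 'I_n -> R) : \sum_i a i ^+ 2 = 0 -> forall i, a i = 0.
Proof.
move=> /eqP; rewrite psumr_eq0 => [/allP H i|j _]; last exact: sqr_ge0.
by have /implyP/(_ isT) := H i (mem_index_enum _); rewrite sqrf_eq0 => /eqP.
Qed.

Lemma cs_sum (a b : 'I_n -> R) :
  \sum_i a i * b i <= Num.sqrt (\sum_i a i ^+ 2) * Num.sqrt (\sum_i b i ^+ 2).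
Proof.
set A := \sum_i a i ^+ 2; set B := \sum_i b i ^+ 2.
have A0 := sum_sq_ge0 a; have B0 := sum_sq_ge0 b.
have [Ae|Ane] := eqVneq A 0.
  have ai := sum_sq_eq0 Ae.
  rewrite big1 ?mulr_ge0 ?sqrtr_ge0// => i _; by rewrite ai mul0r.
have [Be|Bne] := eqVneq B 0.
  have bi := sum_sq_eq0 Be.
  rewrite big1 ?mulr_ge0 ?sqrtr_ge0// => i _; by rewrite bi mulr0.
have Ap : 0 < A by rewrite lt0r Ane.
have Bp : 0 < B by rewrite lt0r Bne.
set s := Num.sqrt A; set t := Num.sqrt B.
have sp : 0 < s by rewrite sqrtr_gt0.
have tp : 0 < t by rewrite sqrtr_gt0.
have ss : s ^+ 2 = A by rewrite sqr_sqrtr.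
have tt : t ^+ 2 = B by rewrite sqr_sqrtr.
have key : forall i, 2 * (a i * b i) <= (t / s) * a i ^+ 2 + (s / t) * b i ^+ 2.
  move=> i.
  have h : 0 <= (t * a i - s * b i) ^+ 2 / (s * t) by apply: divr_ge0; [exact: sqr_ge0|exact: ltW(mulr_gt0 sp tp)].
  have -> : (t / s) * a i ^+ 2 + (s / t) * b i ^+ 2 = (t * a i - s * b i) ^+ 2 / (s * t) + 2 * (a i * b i).
    field; by rewrite ?gt_eqF.
  lra.
have : 2 * (\sum_i a i * b i) <= (t / s) * A + (s / t) * B.
  rewrite mulr_sumr /A /B !mulr_sumr -big_split /=.
  by apply: ler_sum => i _; exact: key.
rewrite -ss -tt.
have -> : t / s * s ^+ 2 + s / t * t ^+ 2 = 2 * (s * t).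
  field; by rewrite ?gt_eqF.
lra.
Qed.

End Eucl.


Section Eucl2.
Variables (R : realType) (n : nat).
Notation V := 'rV[R]_n.
Implicit Types x y z : V.

Lemma enorm_ge0 x : 0 <= enorm x.
Proof. exact: sqrtr_ge0. Qed.

Lemma enormN x : enorm (- x) = enorm x.
Proof. by rewrite /enorm; congr Num.sqrt; apply: eq_bigr => i _; rewrite mxE sqrrN. Qed.

Lemma enormD x y : enorm (x + y) <= enorm x + enorm y.
Proof.
rewrite /enorm.
set sx := Num.sqrt (\sum_i x ord0 i ^+ 2); set sy := Num.sqrt (\sum_i y ord0 i ^+ 2).
have sx0 : 0 <= sx := sqrtr_ge0 _.
have sy0 : 0 <= sy := sqrtr_ge0 _.
rewrite -(ger0_norm (addr_ge0 sx0 sy0)) -sqrtr_sqr ler_sqrt; last exact: sqr_ge0.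
have -> : \sum_i (x + y) ord0 i ^+ 2 =
   \sum_i x ord0 i ^+ 2 + 2 * \sum_i x ord0 i * y ord0 i + \sum_i y ord0 i ^+ 2.
  rewrite mulr_sumr -!big_split /=; apply: eq_bigr => i _; rewrite mxE; ring.
have cs := cs_sum (fun i => x ord0 i) (fun i => y ord0 i).
have ex : sx ^+ 2 = \sum_i x ord0 i ^+ 2 by rewrite sqr_sqrtr // sum_sq_ge0.
have ey : sy ^+ 2 = \sum_i y ord0 i ^+ 2 by rewrite sqr_sqrtr // sum_sq_ge0.
rewrite -ex -ey; rewrite -/sx -/sy in cs; nra.
Qed.

Lemma enorm_eq0 x : enorm x = 0 -> x = 0.
Proof.
move=> /eqP; rewrite sqrtr_eq0 => h.
have h0 : \sum_i x ord0 i ^+ 2 = 0 by apply/eqP; rewrite eq_le h sum_sq_ge0.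
apply/rowP => i; rewrite mxE; exact: sum_sq_eq0 h0 i.
Qed.

Lemma ed_ge0 x y : 0 <= edist x y. Proof. exact: enorm_ge0. Qed.

Lemma ed_sym x y : edist x y = edist y x.
Proof. by rewrite /edist -enormN opprB. Qed.

Lemma ed_tri x y z : edist x z <= edist x y + edist y z.
Proof. by rewrite /edist; apply: le_trans (enormD _ _); rewrite addrA subrK. Qed.

Lemma ed_eq0 x y : edist x y = 0 -> x = y.
Proof. by move/enorm_eq0/eqP; rewrite subr_eq0 => /eqP. Qed.

Lemma ed_xx x : edist x x = 0.
Proof.
by rewrite /edist subrr /enorm big1 ?sqrtr0// => i _; rewrite mxE expr0n.
Qed.

Lemma entry_le_enorm x i : `|x ord0 i| <= enorm x.
Proof.
rewrite -sqrtr_sqr ler_sqrt ?sum_sq_ge0//.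
rewrite (bigD1 i) //= lerDl; apply: sumr_ge0 => j _; exact: sqr_ge0.
Qed.

Lemma entry_le_norm x i : `|x ord0 i| <= `|x|.
Proof.
have /mapP[j Hj ->] : `|x ord0 i| \in [seq `|x k.1 k.2| | k : 'I_1 * 'I_n].
  by apply/mapP; exists (ord0, i) => //=; rewrite mem_enum.
by rewrite [leRHS]/Num.norm /= mx_normrE; apply/bigmax_geP; right => /=; exists j.
Qed.

Lemma norm_le_enorm x : `|x| <= enorm x.
Proof.
have [x0|] := eqVneq `|x| 0; first by rewrite x0 enorm_ge0.
move=> /mx_norm_neq0 [[i j] h]; have -> : `|x| = mx_norm x by [].
rewrite h /=.
by rewrite (ord1 i); exact: entry_le_enorm.
Qed.

Lemma enorm_le_norm x : enorm x <= n.+1%:R * `|x|.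
Proof.
rewrite -(ger0_norm (mulr_ge0 (ler0n _ _) (normr_ge0 x))) -sqrtr_sqr ler_sqrt; last exact: sqr_ge0.
apply: (@le_trans _ _ (\sum_(i < n) `|x| ^+ 2)).
  apply: ler_sum => i _; rewrite -real_normK ?num_real//.
  apply: lerXn2r; rewrite ?nnegrE//; exact: entry_le_norm.
rewrite sumr_const card_ord -mulr_natr exprMn.
have h0 : 0 <= `|x| ^+ 2 by exact: sqr_ge0.
rewrite -mulr_natr mul1r.
have : (n%:R : R) <= n.+1%:R by rewrite ler_nat.
have : (1 : R) <= n.+1%:R by rewrite ler1n.
nra.
Qed.

End Eucl2.


Section Dp.
Variables (R : realType) (p : R).
Hypothesis p1 : 1 <= p.

Definition Dp (a b : R) := powR (powR a p + powR b p) p^-1.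

Let p0 : 0 < p. Proof. exact: lt_le_trans ltr01 p1. Qed.
Let ip0 : 0 <= p^-1. Proof. by rewrite invr_ge0 ltW. Qed.

Lemma powRK (a : R) : 0 <= a -> powR (powR a p) p^-1 = a.
Proof. by move=> a0; rewrite -powRrM divff ?gt_eqF// powRr1. Qed.

Lemma Dp_ge0 a b : 0 <= Dp a b. Proof. exact: powR_ge0. Qed.

Lemma Dp_ge_l (a b : R) : 0 <= a -> a <= Dp a b.
Proof.
move=> a0; rewrite -{1}(powRK a0) /Dp; apply: ge0_ler_powR => //;
  rewrite ?nnegrE ?addr_ge0 ?powR_ge0// lerDl powR_ge0//.
Qed.

Lemma Dp_ge_r (a b : R) : 0 <= b -> b <= Dp a b.
Proof.
move=> b0; rewrite -{1}(powRK b0) /Dp; apply: ge0_ler_powR => //;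
  rewrite ?nnegrE ?addr_ge0 ?powR_ge0// lerDr powR_ge0//.
Qed.

Lemma Dp_mono (a b a' b' : R) : 0 <= a -> 0 <= b -> a <= a' -> b <= b' -> Dp a b <= Dp a' b'.
Proof.
move=> a0 b0 aa bb; rewrite /Dp; apply: ge0_ler_powR => //;
  rewrite ?nnegrE ?addr_ge0 ?powR_ge0//.
apply: lerD; apply: ge0_ler_powR; rewrite ?nnegrE//; by [exact: ltW|lra].
Qed.

Lemma Dp_scale (l a b : R) : 0 <= l -> 0 <= a -> 0 <= b -> Dp (l * a) (l * b) = l * Dp a b.
Proof.
move=> l0 a0 b0; rewrite /Dp !powRM// -mulrDr powRM ?powR_ge0 ?addr_ge0 ?powR_ge0//.
by rewrite powRK.
Qed.

Lemma Dp_le2 (a b m : R) : 0 <= a -> 0 <= b -> a <= m -> b <= m -> Dp a b <= 2 * m.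
Proof.
move=> a0 b0 am bm; have m0 : 0 <= m by lra.
apply: (le_trans (Dp_mono a0 b0 am bm)).
rewrite -[m in Dp m _]mulr1 -[m in Dp _ m]mulr1 Dp_scale// mulrC ler_wpM2r//.
rewrite /Dp powR1 -[leRHS](@powRr1 _ 2)//; apply: ler_powR; first lra.
by rewrite invf_le1.
Qed.

Lemma Dp_gt0 (a b : R) : 0 < a -> 0 < Dp a b.
Proof. move=> a0; apply: (lt_le_trans a0); apply: Dp_ge_l; lra. Qed.

End Dp.


Section Topo.
Variables (R : realType) (n : nat).
Notation V := 'rV[R]_n.
Implicit Types (x y z w : V) (G : set V).

Lemma bdry_notin G w : open G -> bdry G w -> ~ G w.
Proof.
move=> oG [_ nint] Gw; apply: nint.
by move: oG; rewrite openE => /(_ w Gw).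
Qed.

Lemma open_ball_enorm G z : open G -> G z ->
  exists2 d, 0 < d & forall x, edist x z < d -> G x.
Proof.
move=> oG Gz.
have : nbhs z G by move: oG; rewrite openE => /(_ z Gz).
move=> /nbhs_ballP [e e0 sub]; exists e => // x hx; apply: sub.
rewrite -ball_normE /ball_ /= (le_lt_trans (norm_le_enorm _))//.
by rewrite -/(edist z x) ed_sym.
Qed.

Lemma bdry_nonempty G : domain G -> G != setT -> bdry G !=set0.
Proof.
move=> [[a Ga] [oG cG]] GT.
have [b nGb] : exists b, ~ G b.
  apply: contrapT => nb; move/eqP: GT; apply.
  rewrite predeqE => x; split => // _; apply: contrapT => nx; apply: nb; by exists x.
apply: contrapT => nob.
have clG : closed G.
  move=> x clx; apply: contrapT => nGx; apply: nob; exists x; split => //.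
  by move=> /interior_subset.
pose phi := fun t : R => a + t *: (b - a).
have phic : continuous phi.
  move=> t; rewrite /phi; apply: cvgD; first exact: cvg_cst.
  by apply: cvgZr_tmp; exact: cvg_id.
have cS : connected (phi @` `[0, 1]).
  apply: connected_continuous_connected; first exact: segment_connected.
  exact: continuous_subspaceT.
have := cS (phi @` `[0, 1] `&` G).
have h0 : phi 0 = a by rewrite /phi scale0r addr0.
have h1 : phi 1 = b by rewrite /phi scale1r addrC subrK.
have I0 : `[(0:R), 1]%classic 0 by rewrite /= in_itv /= lexx ler01.
have I1 : `[(0:R), 1]%classic 1 by rewrite /= in_itv /= lexx ler01.
move=> E; have : (phi @` `[0, 1] `&` G) = phi @` `[0, 1].
  apply: E.
  - by exists a; split => //; exists 0.
  - by exists G.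
  - by exists G.
move=> /(congr1 (fun S => S b)) /=; rewrite propeqE => -[_ /(_ _)] [].
  by exists 1.
by [].
Qed.

End Topo.


Lemma ler_divl (R : realFieldType) (r A B : R) : 0 <= r -> 0 < B -> B <= A -> r / A <= r / B.
Proof.
move=> r0 B0 BA; apply: ler_wpM2l => //.
by rewrite lef_pV2 // posrE; apply: lt_le_trans BA.
Qed.

Section Dist.
Variables (R : realType) (n : nat).
Notation V := 'rV[R]_n.
Implicit Types (x y z w : V) (G : set V).

Definition dset G z := [set edist z w | w in bdry G].
Definition dG G z := inf (dset G z).

Variable G : set V.
Hypothesis domG : domain G.
Hypothesis GT : G != setT.

Let oG : open G. Proof. by case: domG => _ []. Qed.

Lemma dset_n0 z : dset G z !=set0.
Proof. by have [w bw] := bdry_nonempty domG GT; exists (edist z w), w. Qed.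

Lemma dset_lb z : has_lbound (dset G z).
Proof. by exists 0 => _ [w _ <-]; exact: ed_ge0. Qed.

Lemma dG_le z w : bdry G w -> dG G z <= edist z w.
Proof. by move=> bw; apply: ge_inf; [exact: dset_lb| exists w]. Qed.

Lemma dG_gt0 z : G z -> 0 < dG G z.
Proof.
move=> Gz; have [d d0 hd] := open_ball_enorm oG Gz.
apply: (lt_le_trans d0); apply: lb_le_inf; first exact: dset_n0.
move=> _ [w bw <-]; rewrite leNgt; apply/negP => hw.
apply: (bdry_notin oG bw); apply: hd; by rewrite ed_sym.
Qed.

Lemma dG_near z e : 0 < e -> exists2 w, bdry G w & edist z w < dG G z + e.
Proof.
move=> e0; have [_ [w bw <-] h] := inf_adherent e0 (conj (dset_n0 z) (dset_lb z)).
by exists w.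
Qed.

Variable p : R.
Hypothesis p1 : 1 <= p.

Definition belt z1 z2 w := edist z1 z2 / Dp p (edist z1 w) (edist w z2).

Lemma b_le z1 z2 M : (forall w, bdry G w -> belt z1 z2 w <= M) -> b_metric G p z1 z2 <= M.
Proof.
move=> h; apply: ge_sup.
  by have [w bw] := bdry_nonempty domG GT; exists (belt z1 z2 w), w.
by move=> _ [w bw <-]; exact: h.
Qed.

Lemma b_ge z1 z2 w : G z2 -> bdry G w -> belt z1 z2 w <= b_metric G p z1 z2.
Proof.
move=> Gz bw; apply: ub_le_sup; last by exists w.
exists (edist z1 z2 / dG G z2) => _ [v bv <-].
apply: (@ler_divl R); first exact: ed_ge0; first exact: dG_gt0.
apply: (le_trans (dG_le z2 bv)); rewrite ed_sym; apply: (Dp_ge_r p1); exact: ed_ge0.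
Qed.

Lemma b_ge0 z1 z2 : G z2 -> 0 <= b_metric G p z1 z2.
Proof.
move=> Gz; have [w bw] := bdry_nonempty domG GT.
apply: le_trans (b_ge z1 Gz bw); apply: divr_ge0; [exact: ed_ge0|exact: Dp_ge0].
Qed.

Lemma E1 x z r : G z -> edist x z = r -> r < dG G z ->
  b_metric G p x z <= r / Dp p (dG G z - r) (dG G z).
Proof.
move=> Gz xr rd; have d0 := dG_gt0 Gz.
have r0 : 0 <= r by rewrite -xr ed_ge0.
apply: b_le => w bw; rewrite /belt xr; apply: (@ler_divl R r); first exact: r0.
  by apply: (Dp_gt0 p1); lra.
apply: (Dp_mono p1).
- lra.
- exact: ltW.
- have := ed_tri z x w; rewrite (ed_sym z x) xr.
  have := dG_le z bw; lra.
- by rewrite ed_sym; exact: dG_le.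
Qed.

Lemma E2 x z e : G z -> 0 < e ->
  edist x z / Dp p (dG G z + edist x z + e) (dG G z + e) <= b_metric G p x z.
Proof.
move=> Gz e0; have d0 := dG_gt0 Gz.
have [w bw hw] := dG_near z e0.
apply: le_trans (b_ge x Gz bw); rewrite /belt.
have r0 := ed_ge0 x z.
apply: (@ler_divl R); first exact: r0.
  apply: (@lt_le_trans _ _ (dG G z)); first exact: d0.
  apply: le_trans (dG_le z bw) _; rewrite (ed_sym z w).
  apply: (Dp_ge_r p1); exact: ed_ge0.
apply: (Dp_mono p1); [exact: ed_ge0|exact: ed_ge0| |].
- have := ed_tri x z w; lra.
- rewrite ed_sym; lra.
Qed.

End Dist.


Section Cont.
Variables (R : realType) (n : nat).
Notation V := 'rV[R]_n.
Variables (G D : set V) (p L : R) (h : V -> V) (z : V).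
Hypotheses (domG : domain G) (GT : G != setT) (domD : domain D) (DT : D != setT).
Hypotheses (p1 : 1 <= p) (L1 : 1 <= L) (Gz : G z) (Dhz : D (h z)).
Hypothesis hb : forall x, G x -> b_metric D p (h x) (h z) <= L * b_metric G p x z.

Lemma cont_transfer e : 0 < e ->
  exists2 d, 0 < d & forall x, G x -> edist x z < d -> edist (h x) (h z) < e.
Proof.
move=> e0; have hL := L1.
have dg0 := dG_gt0 domG GT Gz; have dd0 := dG_gt0 domD DT Dhz.
set dg := dG G z in dg0 *; set dd := dG D (h z) in dd0 *.
have L0 : 0 < L by lra.
exists (Num.min (dg / (4 * L)) (e * dg / (16 * L * dd))).
  by rewrite lt_min; apply/andP; split; apply: divr_gt0 => //; nra.
move=> x Gx; rewrite lt_min => /andP [r1 r2].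
set r := edist x z in r1 r2.
have r0 : 0 <= r by exact: ed_ge0.
have hr1 : 4 * L * r < dg.
  by move: r1; rewrite ltr_pdivlMr; [lra| nra].
have hr2 : 16 * L * dd * r < e * dg.
  move: r2; rewrite ltr_pdivlMr; [lra| apply: mulr_gt0 => //; nra].
have rdg : r < dg by nra.
have bG : b_metric G p x z <= r / dg.
  apply: le_trans (E1 domG GT p1 Gz (erefl r) rdg) _.
  apply: (@ler_divl R); [exact: r0|exact: dg0|].
  apply: (Dp_ge_r p1); exact: ltW.
set s := edist (h x) (h z).
have s0 : 0 <= s by exact: ed_ge0.
have bD := E2 domD DT p1 (h x) Dhz dd0.
rewrite -/s -/dd in bD.
have k0 : s / Dp p (dd + s + dd) (dd + dd) <= L * (r / dg).
  apply: le_trans bD _; apply: le_trans (hb Gx) _.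
  by apply: ler_wpM2l; [exact: ltW|exact: bG].
clear bD bG hb; clearbody s r dd dg.
have hDp : Dp p (dd + s + dd) (dd + dd) <= 2 * (dd + s + dd).
  apply: (Dp_le2 p1); lra.
have Dp0 : 0 < Dp p (dd + s + dd) (dd + dd) by apply: (Dp_gt0 p1); lra.
have k1 : s / (2 * (dd + s + dd)) <= L * (r / dg).
  apply: le_trans k0.
  apply: (@ler_divl R); [exact: s0|exact: Dp0|exact: hDp].
clear k0 hDp Dp0.
move: k1; rewrite ler_pdivrMr; last lra.
have -> : L * (r / dg) * (2 * (dd + s + dd)) = (2 * L * r * (dd + s + dd)) / dg.
  by field; lra.
rewrite ler_pdivlMr; last exact: dg0.
move=> k3; nra.
Qed.

End Cont.


Lemma Dp_hom (R : realType) (p a b a' b' l : R) : 1 <= p ->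
  0 <= a -> 0 <= b -> 0 <= a' -> 0 <= b' -> 0 <= l -> a' <= l * a -> b' <= l * b ->
  Dp p a' b' <= l * Dp p a b.
Proof.
move=> p1 a0 b0 a'0 b'0 l0 ha hb.
rewrite -(Dp_scale p1 l0 a0 b0); apply: (Dp_mono p1) => //.
Qed.

Lemma cross (R : realType) (a b c d k : R) : 0 < b -> 0 < d ->
  a / b <= k * (c / d) -> a * d <= k * c * b.
Proof.
move=> b0 d0; rewrite ler_pdivrMr // => h.
have := ler_wpM2r (ltW d0) h.
have -> : k * (c / d) * b * d = k * c * b by field; rewrite gt_eqF.
by [].
Qed.

Lemma Dp_homQ (R : realType) (p d t s r : R) : 1 <= p -> 0 <= t -> t < d -> 0 <= s -> 0 <= r ->
  Dp p (d + s + r) (d + r) * (d - t) <= (d + s + r) * Dp p (d - t) d.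
Proof.
move=> p1 t0 td s0 r0.
have l0 : 0 <= (d + s + r) / (d - t) by apply: divr_ge0; lra.
have e1 : (d + s + r) / (d - t) * (d - t) = d + s + r by field; lra.
have H : Dp p (d + s + r) (d + r) <= (d + s + r) / (d - t) * Dp p (d - t) d.
  apply: Dp_hom => //; try lra.
  rewrite mulrAC ler_pdivlMr; [nra|lra].
have dt : 0 < d - t by lra.
move: H; rewrite -ler_pdivlMr //.
have -> : (d + s + r) / (d - t) * Dp p (d - t) d = (d + s + r) * Dp p (d - t) d / (d - t).
  by field; lra.
by [].
Qed.

Lemma arith_sphere (R : realType) (L r s t dg dd P Q P' Q' : R) :
  0 < L -> 0 < r -> r < dg -> 0 <= s -> 0 <= t -> t < dd -> 0 < dd ->
  0 < P -> 0 < Q -> 0 < P' -> 0 < Q' -> dd <= Q ->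
  s * P <= L * r * Q' -> r * Q <= L * t * P' ->
  Q' * (dd - t) <= (dd + s + r) * Q -> P' * (dg - r) <= (dg + r + r) * P ->
  s * (dg - r) * (dd - t) <= L ^+ 2 * t * (dg + r + r) * (dd + s + r)
  /\ r * dd <= L * t * P'.
Proof.
move=> L0 r0 rdg s0 t0 tdd dd0 P0 Q0 P'0 Q'0 QD B1 B2 HQ HP; split; last first.
  by apply: le_trans B2; apply: ler_wpM2l; lra.
have c1 : s * P * (dd - t) * (dg - r) <= L * r * (Q' * (dd - t)) * (dg - r).
  apply: ler_wpM2r; first lra.
  rewrite [leRHS]mulrA; apply: ler_wpM2r; [lra|exact: B1].
have c2 : L * r * (Q' * (dd - t)) * (dg - r) <= L * (dd + s + r) * (r * Q) * (dg - r).
  apply: ler_wpM2r; first lra.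
  have -> : L * (dd + s + r) * (r * Q) = (L * r) * ((dd + s + r) * Q) by ring.
  apply: ler_wpM2l; [nra|exact: HQ].
have c3 : L * (dd + s + r) * (r * Q) * (dg - r) <= L * (dd + s + r) * (L * t * P') * (dg - r).
  apply: ler_wpM2r; first lra.
  apply: ler_wpM2l; [nra|exact: B2].
have c4 : L * (dd + s + r) * (L * t * P') * (dg - r) <= L * (dd + s + r) * (L * t) * ((dg + r + r) * P).
  have -> : L * (dd + s + r) * (L * t * P') * (dg - r) = L * (dd + s + r) * (L * t) * (P' * (dg - r)) by ring.
  apply: ler_wpM2l; [|exact: HP].
  apply: mulr_ge0; nra.
have c5 := le_trans c1 (le_trans c2 (le_trans c3 c4)).
have e : L * (dd + s + r) * (L * t) * ((dg + r + r) * P) =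
   (L ^+ 2 * t * (dg + r + r) * (dd + s + r)) * P by ring.
rewrite e in c5.
have e2 : s * P * (dd - t) * (dg - r) = (s * (dg - r) * (dd - t)) * P by ring.
rewrite e2 in c5.
by rewrite -(ler_pM2r P0).
Qed.

Section Sphere.
Variables (R : realType) (n : nat).
Notation V := 'rV[R]_n.
Variables (G D : set V) (p L : R) (f : V -> V) (z : V).
Hypotheses (domG : domain G) (GT : G != setT) (domD : domain D) (DT : D != setT).
Hypotheses (p1 : 1 <= p) (L1 : 1 <= L) (Gz : G z) (Dfz : D (f z)).
Hypothesis hf : forall z1 z2, G z1 -> G z2 ->
     b_metric G p z1 z2 / L <= b_metric D p (f z1) (f z2) /\
     b_metric D p (f z1) (f z2) <= L * b_metric G p z1 z2.

Lemma sphere_est x y r : G x -> G y -> edist x z = r -> edist y z = r -> 0 < r ->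
  r < dG G z -> edist (f y) (f z) < dG D (f z) ->
  edist (f x) (f z) * (dG G z - r) * (dG D (f z) - edist (f y) (f z)) <=
    L ^+ 2 * edist (f y) (f z) * (dG G z + r + r) * (dG D (f z) + edist (f x) (f z) + r)
  /\ r * dG D (f z) <= L * edist (f y) (f z) * Dp p (dG G z + r + r) (dG G z + r).
Proof.
move=> Gx Gy xr yr r0 rdg tdd.
have hL := L1; have hp := p1.
have Lp : 0 < L by lra.
have Ln : 0 <= L by lra.
have dg0 := dG_gt0 domG GT Gz; have dd0 := dG_gt0 domD DT Dfz.
have h1 := E1 domG GT p1 Gz xr rdg.
have h2 := E2 domD DT p1 (f x) Dfz r0.
have h3 := E2 domG GT p1 y Gz r0.
have h4 := E1 domD DT p1 Dfz (erefl (edist (f y) (f z))) tdd.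
have [_ hx] := hf Gx Gz.
have [hy _] := hf Gy Gz.
rewrite yr in h3.
set s := edist (f x) (f z) in h2 *.
set t := edist (f y) (f z) in h4 tdd *.
set dg := dG G z in h1 h3 rdg dg0 *.
set dd := dG D (f z) in h2 h4 tdd dd0 *.
have s0 : 0 <= s by exact: ed_ge0.
have t0 : 0 <= t by exact: ed_ge0.
have A1 : s / Dp p (dd + s + r) (dd + r) <= L * (r / Dp p (dg - r) dg).
  apply: le_trans h2 _; apply: le_trans hx _; apply: ler_wpM2l; [exact: Ln|exact: h1].
have A2 : r / Dp p (dg + r + r) (dg + r) <= L * (t / Dp p (dd - t) dd).
  apply: le_trans h3 _; move: hy; rewrite ler_pdivrMr; last exact: Lp.
  by rewrite mulrC => hy; apply: le_trans hy _; apply: ler_wpM2l; [exact: Ln|exact: h4].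
clear h1 h2 h3 h4 hx hy hf; clearbody s t dg dd.
have rr : 0 <= r by apply: ltW.
have f1 : 0 < dg - r by rewrite subr_gt0.
have f2 : 0 < dd - t by rewrite subr_gt0.
have f3 : 0 < dg + r + r by rewrite !addr_gt0.
have f4 : 0 < dd + s + r by apply: ltr_wpDl; [apply: addr_ge0; [exact: ltW|exact: s0]|exact: r0].
have f5 : 0 <= dd by exact: ltW.
have P0 : 0 < Dp p (dg - r) dg by apply: (Dp_gt0 p1).
have Q0 : 0 < Dp p (dd - t) dd by apply: (Dp_gt0 p1).
have P'0 : 0 < Dp p (dg + r + r) (dg + r) by apply: (Dp_gt0 p1).
have Q'0 : 0 < Dp p (dd + s + r) (dd + r) by apply: (Dp_gt0 p1).
have QD : dd <= Dp p (dd - t) dd by apply: (Dp_ge_r p1).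
have HQ := Dp_homQ p1 t0 tdd s0 rr.
have HP := Dp_homQ p1 rr rdg rr rr.
have B1 := cross Q'0 P0 A1.
have B2 := cross P'0 Q0 A2.
exact: (arith_sphere Lp r0 rdg s0 t0 tdd dd0 P0 Q0 P'0 Q'0 QD B1 B2 HQ HP).
Qed.
End Sphere.


Lemma arith_final (R : realType) (c th r s t dg dd : R) :
  0 < c -> 0 < th -> th <= 1 -> 0 < r -> 4 * r <= th * dg ->
  6 * s <= th * dd -> 6 * t <= th * dd -> 6 * r <= th * dd ->
  0 <= s -> 0 <= t -> 0 < dg -> 0 < dd ->
  s * (dg - r) * (dd - t) <= c * t * (dg + r + r) * (dd + s + r) ->
  s <= c * (1 + th) ^+ 2 * t.
Proof.
move=> c0 th0 th1 r0 h1 h2 h3 h4 s0 t0 dg0 dd0 H.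
have A0 : 0 < dg - r by nra.
have B0 : 0 < dd - t by nra.
have thr : th * r <= r by apply: ler_piMl; [exact: ltW|exact: th1].
have tht : th * t <= t by apply: ler_piMl.
have e1 : dg + r + r <= (1 + th) * (dg - r) by lra.
have e2 : dd + s + r <= (1 + th) * (dd - t) by lra.
have H2 : c * t * (dg + r + r) * (dd + s + r) <= c * t * ((1 + th) * (dg - r)) * ((1 + th) * (dd - t)).
  apply: ler_pM; [apply: mulr_ge0; [apply: mulr_ge0|]; lra|lra| |exact: e2].
  apply: ler_wpM2l; [apply: mulr_ge0; lra|exact: e1].
have H3 := le_trans H H2.
have e3 : c * t * ((1 + th) * (dg - r)) * ((1 + th) * (dd - t)) = (c * (1 + th) ^+ 2 * t) * ((dg - r) * (dd - t)) by ring.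
rewrite e3 -mulrA in H3.
by rewrite -(ler_pM2r (mulr_gt0 A0 B0)).
Qed.

Section Final.
Variables (R : realType) (n : nat).
Notation V := 'rV[R]_n.
Local Open Scope ereal_scope.

Lemma dil_bound (f : V -> V) (z : V) (r K m : R) : (0 < K)%R -> (0 < m)%R ->
  (forall x y, edist x z = r -> edist y z = r ->
     (edist (f x) (f z) <= K * edist (f y) (f z))%R) ->
  (forall y, edist y z = r -> (m <= edist (f y) (f z))%R) ->
  dil_ratio f z r <= K%:E.
Proof.
move=> K0 m0 hK hm.
have lfm : m%:E <= lf f z r.
  by apply: le_ereal_inf_tmp => _ [y hy <-]; rewrite lee_fin; exact: hm.
have lf0 : lf f z r != 0.
  by apply/negP => /eqP e; move: lfm; rewrite e lee_fin; apply/negP; rewrite -ltNge.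
rewrite /dil_ratio (negbTE lf0).
have LK : Lf f z r <= (K * fine (lf f z r))%:E.
  apply: ge_ereal_sup => _ [x hx <-].
  have lfy : lf f z r <= (edist (f x) (f z))%:E.
    by apply: ereal_inf_lbound; exists x.
  have lffin : lf f z r = (fine (lf f z r))%:E.
    apply/esym/fineK; rewrite fin_numE; apply/andP; split.
    - by apply/negP => /eqP e; move: lfm; rewrite e.
    - by apply/negP => /eqP e; move: lfy; rewrite e.
  have : ((edist (f x) (f z)) / K)%:E <= lf f z r.
    apply: le_ereal_inf_tmp => _ [y hy <-]; rewrite lee_fin.
    by rewrite ler_pdivrMr // mulrC; exact: hK.
  rewrite lffin lee_fin ler_pdivrMr // => h.
  by rewrite lee_fin mulrC.
have ge0 : 0 <= ((fine (lf f z r))^-1)%:E.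
  rewrite lee_fin invr_ge0; apply: fine_ge0; apply: le_trans lfm; rewrite lee_fin; exact: ltW.
apply: le_trans (lee_wpmul2r ge0 LK) _.
rewrite -EFinM lee_fin.
have [->|fn0] := eqVneq (fine (lf f z r)) 0%R.
  by rewrite mulr0 mul0r; exact: ltW.
by rewrite -mulrA mulfV // mulr1.
Qed.

Lemma lin_dil_le (f : V -> V) (z : V) (c : R) :
  (forall e, (0 < e)%R -> exists2 r0, (0 < r0)%R &
     forall r, (0 < r)%R -> (r < r0)%R -> dil_ratio f z r <= (c + e)%:E) ->
  lin_dil f z <= c%:E.
Proof.
move=> H; apply/lee_addgt0Pr => e e0.
have [r0 r00 hr] := H e e0.
rewrite /lin_dil limf_esupE; apply: ge_ereal_inf.
exists (ereal_sup (dil_ratio f z @` [set r | (0 < r)%R /\ (r < r0)%R])).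
  exists [set r | (0 < r)%R /\ (r < r0)%R] => //.
  near=> r; split; near: r; [exact: nbhs_right_gt|exact: nbhs_right_lt].
apply: ge_ereal_sup => _ [r [r0' r1] <-]; rewrite -EFinD; exact: hr.
Unshelve. all: by end_near.
Qed.

End Final.


Section Local.
Variables (R : realType) (n : nat).
Notation V := 'rV[R]_n.
Variables (G D : set V) (p L : R) (f : V -> V) (z : V).
Hypotheses (domG : domain G) (GT : G != setT) (domD : domain D) (DT : D != setT).
Hypotheses (p1 : 1 <= p) (L1 : 1 <= L) (Gz : G z) (Dfz : D (f z)).
Hypothesis hf : forall z1 z2, G z1 -> G z2 ->
     b_metric G p z1 z2 / L <= b_metric D p (f z1) (f z2) /\
     b_metric D p (f z1) (f z2) <= L * b_metric G p z1 z2.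

Lemma dil_local e : 0 < e -> exists2 r0, 0 < r0 &
  forall r, 0 < r -> r < r0 -> (dil_ratio f z r <= (L ^+ 2 + e)%:E)%E.
Proof.
move=> e0; have hL := L1; have hp := p1.
have L0 : 0 < L by lra.
have c0 : 0 < L ^+ 2 by rewrite exprn_gt0.
set c := L ^+ 2 in c0 *.
set th := Num.min 1 (e / (3 * c)).
have th0 : 0 < th by rewrite lt_min ltr01 /=; apply: divr_gt0 => //; lra.
have th1 : th <= 1 by rewrite ge_min lexx.
have th2 : th <= e / (3 * c) by rewrite ge_min lexx orbT.
have dg0 := dG_gt0 domG GT Gz; have dd0 := dG_gt0 domD DT Dfz.
have [rho rho0 hrho] := open_ball_enorm domG.2.1 Gz.
have hb : forall x, G x -> b_metric D p (f x) (f z) <= L * b_metric G p x z.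
  by move=> x Gx; case: (hf Gx Gz).
have eps0 : 0 < th * dG D (f z) / 6 by apply: divr_gt0 => //; apply: mulr_gt0.
have [del del0 hdel] := cont_transfer domG GT domD DT p1 L1 Gz Dfz hb eps0.
exists (Num.min (Num.min rho del) (Num.min (th * dG G z / 4) (th * dG D (f z) / 6))).
  rewrite !lt_min rho0 del0 /=; apply/andP; split; apply: divr_gt0 => //; exact: mulr_gt0.
move=> r r0; rewrite !lt_min => /andP [/andP [rrho rdel] /andP [rdg rdd]].
set dg := dG G z in dg0 rdg hdel eps0 *.
set dd := dG D (f z) in dd0 rdd hdel eps0 *.
have rdg' : 4 * r <= th * dg by move: rdg; rewrite ltr_pdivlMr; lra.
have rdd' : 6 * r <= th * dd by move: rdd; rewrite ltr_pdivlMr; lra.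
have rdg2 : r < dg.
  have : th * dg <= dg by apply: ler_piMl; [exact: ltW|exact: th1].
  lra.
have sph : forall x, edist x z = r -> G x /\ 6 * edist (f x) (f z) <= th * dd.
  move=> x hx; have Gx : G x by apply: hrho; rewrite hx.
  split => //; have := hdel x Gx; rewrite hx => /(_ rdel) h.
  move: h; rewrite ltr_pdivlMr; lra.
set P' := Dp p (dg + r + r) (dg + r).
have P'0 : 0 < P' by apply: (Dp_gt0 p1); lra.
apply: (@le_trans _ _ ((c * (1 + th) ^+ 2)%:E)).
  apply: (@dil_bound R n f z r (c * (1 + th) ^+ 2) (r * dd / (L * P'))).
  - by apply: mulr_gt0 => //; apply: exprn_gt0; lra.
  - by apply: divr_gt0; [exact: mulr_gt0|exact: mulr_gt0].
  - move=> x y hx hy.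
    have [Gx sx] := sph x hx; have [Gy sy] := sph y hy.
    have t0 := ed_ge0 (f y) (f z); have s0 := ed_ge0 (f x) (f z).
    have tdd : edist (f y) (f z) < dd.
      have : th * dd <= dd by apply: ler_piMl; [exact: ltW|exact: th1].
      lra.
    have [A _] := sphere_est domG GT domD DT p1 L1 Gz Dfz hf Gx Gy hx hy r0 rdg2 tdd.
    by apply: (arith_final c0 th0 th1 r0 rdg' sx sy rdd' s0 t0 dg0 dd0); exact: A.
  - move=> y hy; have [Gy sy] := sph y hy.
    have tdd : edist (f y) (f z) < dd.
      have : th * dd <= dd by apply: ler_piMl; [exact: ltW|exact: th1].
      have := ed_ge0 (f y) (f z); lra.
    have [_ B] := sphere_est domG GT domD DT p1 L1 Gz Dfz hf Gy Gy hy hy r0 rdg2 tdd.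
    rewrite ler_pdivrMr; last exact: mulr_gt0.
    by rewrite mulrCA mulrA; exact: B.
rewrite lee_fin.
have : th * th <= th by apply: ler_piMl; [exact: ltW|exact: th1].
have : c * (3 * th) <= e.
  by move: th2; rewrite ler_pdivlMr; [lra|lra].
move=> h1 h2; nra.
Qed.

End Local.


Lemma edist_cont (R : realType) (n : nat) (A : set 'rV[R]_n) (h : 'rV[R]_n -> 'rV[R]_n) z :
  open A -> A z ->
  (forall e, 0 < e -> exists2 d, 0 < d & forall x, A x -> edist x z < d -> edist (h x) (h z) < e) ->
  h @ z --> h z.
Proof.
move=> oA Az H; apply/(cvgrPdist_lt _ (FF := nbhs_filter z)) => e e0.
have [d d0 hd] := H e e0.
have [rho rho0 hrho] := open_ball_enorm oA Az.
apply/nbhs_ballP; exists (Num.min d rho / n.+1%:R).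
  by apply: divr_gt0; [rewrite lt_min d0 rho0|exact: ltr0Sn].
move=> x; rewrite -ball_normE /ball_ /= => hx.
have hx' : edist x z < Num.min d rho.
  apply: le_lt_trans (enorm_le_norm _) _.
  by rewrite -ltr_pdivlMl ?ltr0Sn // mulrC distrC.
move: hx'; rewrite lt_min => /andP [xd xr].
apply: le_lt_trans (norm_le_enorm _) _; rewrite -/(edist (h z) (h x)) ed_sym.
by apply: hd => //; exact: hrho.
Qed.

Theorem theorem4p9 (R : realType) (n : nat) (G D : set 'rV[R]_n) (p L : R)
  (f : 'rV[R]_n -> 'rV[R]_n) :
  domain G -> domain D -> G != setT -> D != setT ->
  1 <= p -> 1 <= L ->
  (forall z, G z -> D (f z)) -> (forall y, D y -> exists2 z, G z & f z = y) ->
  (forall z1 z2, G z1 -> G z2 ->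
     b_metric G p z1 z2 / L <= b_metric D p (f z1) (f z2) /\
     b_metric D p (f z1) (f z2) <= L * b_metric G p z1 z2) ->
  quasiconformal G D f /\
  (forall z, G z -> (lin_dil f z <= (powR 4 (1 - p^-1) * L ^+ 2)%:E)%E).
Proof.
move=> domG domD GT DT p1 L1 fGD fsurj hf.
have hL := L1; have hp := p1.
have L0 : 0 < L by lra.
have Ln : 0 <= L by lra.
pose g := fun y => match pselect (D y) with
  | left h => s2val (cid2 (fsurj y h)) | right _ => y end.
have gD : forall y, D y -> G (g y) /\ f (g y) = y.
  move=> y Dy; rewrite /g; case: pselect => [h|//].
  by case: cid2 => /= x Gx fx.
have b0 : forall u, b_metric D p u u <= 0.
  move=> u; apply: (b_le domD DT) => w _.
  by rewrite /belt ed_xx mul0r.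
have inj : forall x x', G x -> G x' -> f x = f x' -> x = x'.
  move=> x x' Gx Gx' fxx; apply: contrapT => nx.
  have dpos : 0 < edist x x'.
    rewrite lt_neqAle ed_ge0 andbT; apply/eqP => h; apply: nx; exact: ed_eq0.
  have dg0 := dG_gt0 domG GT Gx'.
  have h2 := E2 domG GT p1 x Gx' ltr01.
  have [h3 _] := hf x x' Gx Gx'.
  rewrite fxx in h3.
  have h4 := le_trans h3 (b0 (f x')).
  have : 0 < edist x x' / Dp p (dG G x' + edist x x' + 1) (dG G x' + 1).
    by apply: divr_gt0 => //; apply: (Dp_gt0 p1); rewrite !addr_gt0.
  move=> h5; have h6 := lt_le_trans h5 h2.
  move: h4; rewrite ler_pdivrMr // mul0r => h4.
  by move: (lt_le_trans h6 h4); rewrite ltxx.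
have gf : forall x, G x -> g (f x) = x.
  move=> x Gx; have [Ggfx fgfx] := gD (f x) (fGD x Gx).
  exact: inj Ggfx Gx fgfx.
have oG : open G by case: domG => _ [].
have oD : open D by case: domD => _ [].
have dil : forall z, G z -> (lin_dil f z <= (L ^+ 2)%:E)%E.
  move=> z Gz; apply: lin_dil_le => e e0.
  exact: (dil_local domG GT domD DT p1 L1 Gz (fGD z Gz) hf e0).
have bound : L ^+ 2 <= powR 4 (1 - p^-1) * L ^+ 2.
  rewrite ler_pMl ?exprn_gt0 //.
  have h4 : (1 : R) <= 4 by lra.
  have hx : (0 : R) <= 1 - p^-1 by rewrite subr_ge0 invf_le1; lra.
  by have := ler_powR h4 hx; rewrite powRr0.
have dil' : forall z, G z -> (lin_dil f z <= (powR 4 (1 - p^-1) * L ^+ 2)%:E)%E.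
  by move=> z Gz; apply: le_trans (dil z Gz) _; rewrite lee_fin.
split => //; split; last by exists (powR 4 (1 - p^-1) * L ^+ 2).
exists g; split => //; split; first by move=> y Dy; case: (gD y Dy).
split => //; split; first by move=> y Dy; case: (gD y Dy).
split.
- apply: continuous_in_subspaceT => x; rewrite in_setE => Gx.
  apply: (edist_cont oG Gx).
  apply: (cont_transfer domG GT domD DT p1 L1 Gx (fGD x Gx)).
  by move=> x' Gx'; case: (hf x' x Gx' Gx).
- apply: continuous_in_subspaceT => y; rewrite in_setE => Dy.
  apply: (edist_cont oD Dy).
  have [Ggy fgy] := gD y Dy.
  apply: (cont_transfer domD DT domG GT p1 L1 Dy Ggy).
  move=> u Du; have [Ggu fgu] := gD u Du.
  have [h _] := hf (g u) (g y) Ggu Ggy.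
  by move: h; rewrite fgu fgy ler_pdivrMr // mulrC.
Qed.
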